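(* Let $\beta>0$, $\tilde\sigma\in[0,1)$ and $(\tau,\theta)\in\mathcal R_{\tilde\sigma}$. Define the $2m\times 2m$ matrix $$Q=\begin{bmatrix}(3-3\tau-2\tilde\sigma)\beta I&2(1-\tau-\tilde\sigma)I\\ 2(1-\tau-\tilde\sigma)I&\frac{4-\tau-\theta-2\tilde\sigma}{\beta}I\end{bmatrix}$$ and the scalar $\vartheta=\sqrt{(3-3\tau-2\tilde\sigma)(4-\tau-\theta-2\tilde\sigma)}-2(1-\tau-\tilde\sigma)$. Then $Q$ is symmetric positive definite and $\vartheta>0$. Moreover, for any $(y,\gamma)\in\mathbb{R}^m\times\mathbb{R}^m$, $\|(y,\gamma)\|_Q^2\ge-2\vartheta\langle y,\gamma\rangle$.
   Context: $I$ is the $m\times m$ identity; $\|z\|_Q=\sqrt{\langle Qz,z\rangle}$. $\mathcal R_{\tilde\sigma}:=\{(\tau,\theta):\tau\in(-1,1-\tilde\sigma),\ \tau+\theta>0,\ (1-\tau^2)(2-\tau-\theta-\tilde\sigma)-(1-\theta)^2(1-\tau-\tilde\sigma)>0\}$. *)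

(* Defs.v *)
From HB Require Import structures.
From mathcomp Require Import all_boot all_order all_algebra.
Set Implicit Arguments. Unset Strict Implicit. Unset Printing Implicit Defensive.
Import Order.TTheory GRing.Theory Num.Theory.
Local Open Scope ring_scope.

Definition inner (R : rcfType) (n : nat) (u v : 'cV[R]_n) : R := (u^T *m v) 0 0.

Definition normQ2 (R : rcfType) (n : nat) (Q : 'M[R]_n) (z : 'cV[R]_n) : R :=
  inner (Q *m z) z.

Definition sym_posdef (R : rcfType) (n : nat) (Q : 'M[R]_n) : Prop :=
  Q^T = Q /\ forall z : 'cV[R]_n, z != 0 -> 0 < inner (Q *m z) z.

Definition region (R : rcfType) (s tau theta : R) : Prop :=
  [/\ -1 < tau, tau < 1 - s, 0 < tau + theta &
      0 < (1 - tau ^+ 2) * (2 - tau - theta - s)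
          - (1 - theta) ^+ 2 * (1 - tau - s)].

Definition Qmat (R : rcfType) (m : nat) (beta s tau theta : R) : 'M[R]_(m + m) :=
  block_mx (((3 - 3 * tau - 2 * s) * beta)%:M) ((2 * (1 - tau - s))%:M)
           ((2 * (1 - tau - s))%:M) (((4 - tau - theta - 2 * s) / beta)%:M).

Definition vartheta (R : rcfType) (s tau theta : R) : R :=
  Num.sqrt ((3 - 3 * tau - 2 * s) * (4 - tau - theta - 2 * s)) - 2 * (1 - tau - s).

(* Main.v *)
Require Import Defs.
From HB Require Import structures.
From mathcomp Require Import all_boot all_order all_algebra.
From mathcomp Require Import lra ring.
Import Order.TTheory GRing.Theory Num.Theory.
Local Open Scope ring_scope.
Lemma Ppos (R : rcfType) (x y u : R) : 0 < x -> 0 < y -> x + y = 2 -> 0 < u ->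
  0 <= (4*u+x*y)^+2*u + (4*u+x*y)*x*y*(2*u+x) - x*y*u*(2*u+x)^+2.
Proof.
move=> hx hy hxy hu.
have hxy1 : x*y <= 1 by have := sqr_ge0 (x-y); nra.
have h1 : 4*u^+3*x*y <= 16*u^+3 by have := mulr_gt0 hu (mulr_gt0 hu hu); nra.
have h2 : 4*u^+2*x^+2*y <= 8*u^+2*x*y.
  have : 0 < u^+2*x*y by rewrite !mulr_gt0 // exprn_gt0.
  nra.
have h3 : u*x^+3*y <= 4*u*x^+2*y.
  have : 0 < u*x^+2*y by rewrite !mulr_gt0 // exprn_gt0.
  nra.
have : 0 <= u*x^+2*y^+2 by rewrite !mulr_ge0 // ?ltW // exprn_ge0 // ltW.
have : 0 <= x^+3*y^+2 by rewrite !mulr_ge0 // ?ltW // exprn_ge0 // ltW.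
have : 0 <= u^+2*x*y by rewrite !mulr_ge0 // ?ltW // exprn_ge0 // ltW.
have : 0 <= u*x^+2*y by rewrite !mulr_ge0 // ?ltW // exprn_ge0 // ltW.
nra.
Qed.
Lemma key (R : rcfType) (x y u p : R) : 0 < x -> 0 < y -> x + y = 2 -> 0 < u ->
  0 < p -> p * (x*y + p*u) < x*y*u -> p*(2*u+x) < 4*u+x*y.
Proof.
move=> hx hy hxy hu hp hf.
rewrite ltNge; apply/negP => hK.
have hP := @Ppos R x y u hx hy hxy hu.
have h2 : 0 < (2*u+x)^+2 by rewrite exprn_gt0 //; lra.
have hm : 0 <= u*(p*(2*u+x) + 4*u+x*y) + x*y*(2*u+x).
  have : 0 < x*y by rewrite mulr_gt0.
  have : 0 < p*(2*u+x) by rewrite mulr_gt0 //; lra.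
  nra.
have hK' : 0 <= p*(2*u+x) - (4*u+x*y) by lra.
have := mulr_ge0 hK' hm.
have : (2*u+x)^+2 * (p * (x*y + p*u) - x*y*u) < 0 by rewrite pmulr_rlt0 //; lra.
lra.
Qed.
Lemma arith2 (R : rcfType) (s tau theta : R) : 0 <= s -> s < 1 ->
 -1 < tau -> tau < 1 - s ->
 0 < (1 - tau ^+ 2) * (2 - tau - theta - s) - (1 - theta) ^+ 2 * (1 - tau - s) ->
 (2 * (1 - tau - s))^+2 < (3 - 3 * tau - 2 * s) * (4 - tau - theta - 2 * s).
Proof.
move=> hs0 hs1 ht1 ht2 hr.
have hx : 0 < 1 - tau by lra.
have hy : 0 < 1 + tau by lra.
have hu : 0 < 1 - tau - s by lra.
have hxy : 0 < (1-tau)*(1+tau) by rewrite mulr_gt0.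
case: (lerP 0 (1 - theta)) => hph.
  have : 0 <= (1-theta)*(2*(1-tau-s)+(1-tau)) by rewrite mulr_ge0 //; lra.
  nra.
have hp : 0 < theta - 1 by lra.
have := @key R (1-tau) (1+tau) (1-tau-s) (theta-1) hx hy ltac:(lra) hu hp ltac:(nra).
nra.
Qed.

Section Inner.
Variables (R : rcfType) (n : nat).
Implicit Types u v w : 'cV[R]_n.
Lemma innerE u v : inner u v = \sum_i u i 0 * v i 0.
Proof. by rewrite /inner !mxE; apply: eq_bigr => i _; rewrite mxE. Qed.
Lemma innerC u v : inner u v = inner v u.
Proof. by rewrite !innerE; apply: eq_bigr => i _; rewrite mulrC. Qed.
Lemma innerDZl (a b : R) u v w : inner (a *: u + b *: v) w = a * inner u w + b * inner v w.
Proof.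
rewrite !innerE !mulr_sumr -big_split; apply: eq_bigr => i _; rewrite !mxE. by rewrite mulrDl !mulrA.
Qed.
Lemma inner_ge0 u : 0 <= inner u u.
Proof. by rewrite innerE; apply: sumr_ge0 => i _; rewrite -expr2 sqr_ge0. Qed.
Lemma inner_eq0 u : inner u u = 0 -> u = 0.
Proof.
rewrite innerE => /eqP; rewrite psumr_eq0 => [/allP H|i _]; last by rewrite -expr2 sqr_ge0.
apply/matrixP => i j; rewrite ord1 mxE.
by have /= := H i (mem_index_enum _); rewrite mulf_eq0 orbb => /eqP.
Qed.
End Inner.
Arguments innerE {R n}. Arguments innerC {R n}. Arguments innerDZl {R n}. Arguments inner_ge0 {R n}. Arguments inner_eq0 {R n}.

Lemma inner_col (R : rcfType) (m : nat) (u v y g : 'cV[R]_m) :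
  inner (col_mx u v) (col_mx y g) = inner u y + inner v g.
Proof. by rewrite /inner tr_col_mx mul_row_col mxE. Qed.

Lemma normQ2E (R : rcfType) (m : nat) (beta s tau theta : R) (y g : 'cV[R]_m) :
  normQ2 (Qmat m beta s tau theta) (col_mx y g) =
  (3 - 3 * tau - 2 * s) * beta * inner y y + 2 * (2 * (1 - tau - s)) * inner y g
  + (4 - tau - theta - 2 * s) / beta * inner g g.
Proof.
rewrite /normQ2 /Qmat mul_block_col !mul_scalar_mx inner_col !innerDZl.
rewrite (innerC g y); ring.
Qed.

Theorem proposition2p5 (R : rcfType) (m : nat) (beta s tau theta : R) :
  0 < beta -> 0 <= s -> s < 1 -> region s tau theta ->
  [/\ sym_posdef (Qmat m beta s tau theta),
      0 < vartheta s tau theta &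
      forall y g : 'cV[R]_m,
        normQ2 (Qmat m beta s tau theta) (col_mx y g)
          >= - 2 * vartheta s tau theta * inner y g].
Proof.
move=> hb hs0 hs1 [ht1 ht2 htt hr].
set a := 3 - 3 * tau - 2 * s.
set c := 2 * (1 - tau - s).
set d := 4 - tau - theta - 2 * s.
have hc : 0 < c by rewrite /c; lra.
have ha : 0 < a by rewrite /a; lra.
have hD : c ^+ 2 < a * d by exact: arith2.
have hd : 0 < d.
  rewrite ltNge; apply/negP => hd.
  have : a * d <= 0 by rewrite pmulr_rle0.
  have := sqr_ge0 c; lra.
set e := d / beta.
have he : e * beta = d by rewrite /e mulfVK // gt_eqF.
have he0 : 0 < e by rewrite /e divr_gt0.
have hsq : Num.sqrt (a * d) ^+ 2 = a * d by rewrite sqr_sqrtr // ltW // mulr_gt0.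
have hsq0 : 0 <= Num.sqrt (a * d) by exact: sqrtr_ge0.
have hv : 0 < vartheta s tau theta.
  rewrite /vartheta -/a -/c -/d subr_gt0.
  rewrite -(ltr_pXn2r (n:=2)) // ?nnegrE ?ltW // hsq; exact: hD.
split => //.
  split.
    rewrite /Qmat tr_block_mx !tr_scalar_mx; done.
  move=> z hz.
  have := @normQ2E R m beta s tau theta (usubmx z) (dsubmx z); rewrite vsubmxK /normQ2 => ->; rewrite -/a -/c -/d -/e.
  set y := usubmx z; set g := dsubmx z.
  have hw := inner_ge0 ((a * beta) *: y + c *: g).
  rewrite innerDZl !(innerC _ ((a * beta) *: y + c *: g)) !innerDZl in hw.
  rewrite (innerC g y) in hw.
  have hY := inner_ge0 y; have hG := inner_ge0 g.
  have hab : 0 < a * beta by rewrite mulr_gt0.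
  have hK : 0 < a * beta * (a * beta * inner y y + 2 * c * inner y g + e * inner g g).
    have [hG0|hGp] := eqVneq (inner g g) 0.
      have g0 := inner_eq0 _ hG0.
      have hY0 : inner y y != 0.
        apply/eqP => /inner_eq0 y0; move: hz; rewrite -[z]vsubmxK -/y -/g y0 g0.
        by rewrite col_mx0 eqxx.
      have hYp : 0 < inner y y by rewrite lt_def hY0 hY.
      have hyg : inner y g = 0 by rewrite g0 innerC innerE big1 // => i _; rewrite mxE mul0r.
      rewrite hG0 hyg; rewrite !mulr_gt0 //; nra.
    have hGp' : 0 < inner g g by rewrite lt_def hGp hG.
    have : 0 < (a * d - c ^+ 2) * inner g g by rewrite mulr_gt0 // subr_gt0.
    rewrite -he in hw *; nra.
  have : 0 < a * beta * inner y y + 2 * c * inner y g + e * inner g g.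
    by move: hK; rewrite pmulr_rgt0.
  lra.
move=> y g.
rewrite normQ2E -/a -/c -/d -/e /vartheta -/a -/c -/d.
set p := Num.sqrt (a * beta); set q := Num.sqrt e.
have hp2 : p ^+ 2 = a * beta by rewrite sqr_sqrtr // ltW // mulr_gt0.
have hq2 : q ^+ 2 = e by rewrite sqr_sqrtr // ltW.
have hpq : p * q = Num.sqrt (a * d) by rewrite -sqrtrM ?ltW ?mulr_gt0 //; congr Num.sqrt; rewrite -he; ring.
have hw := inner_ge0 (p *: y + q *: g).
rewrite innerDZl !(innerC _ (p *: y + q *: g)) !innerDZl (innerC g y) in hw.
rewrite -hp2 -hq2 -hpq.
nra.
Qed.
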